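(* Let $t\ge1$ and $n=t+1$. The gadget $\mathtt{SecMultSub}$ defined below is $t$-NI secure. $\mathtt{SecMultSub}$ takes as input Boolean sharings $(\mathbf{x}_i)$, $(\mathbf{y}_i)$ of vectors $\mathbf{x},\mathbf{y}\in\mathbb{F}_q^l$ and a Boolean sharing $(c_i)$ of $c\in\mathbb{F}_q$, and computes: for $j=1,\dots,l$: $(\mathbf{t}[j]_i):=\mathtt{SecMult}((\mathbf{x}[j]_i),(c_i))$ and $\mathbf{z}[j]_i:=\mathbf{y}[j]_i-\mathbf{t}[j]_i$ for every $i$. It returns $(\mathbf{z}_i)$.
   Context: A Boolean sharing of $x\in\mathbb{F}_q$ is a tuple $(x_1,\dots,x_n)$ with $x=x_1+\cdots+x_n$ (field addition); vectors are shared coordinate-wise, and $\mathbf{v}[j]$ is the $j$-th coordinate. $\mathtt{SecMult}$ is the ISW masked multiplication gadget, taking Boolean sharings of $a,b\in\mathbb{F}_q$ and returning a Boolean sharing of $a\cdot b$; it is $t$-SNI. Probing model: an adversary may place probes on intermediate values (internal wires) of a gadget and on its output shares. A gadget with one output sharing and some input sharings is $t$-NI (resp. $t$-SNI) secure if any set of at most $t_1$ probes on internal wires and $t_2$ probes on output shares, with $t_1+t_2\le t$, can be perfectly simulated using at most $t_1+t_2$ (resp. $t_1$) shares of each of its input sharings. *)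

(* Defs.v *)
From HB Require Import structures.
From mathcomp Require Import all_boot all_order all_algebra.
Set Implicit Arguments. Unset Strict Implicit. Unset Printing Implicit Defensive.
Import GRing.Theory.
Local Open Scope ring_scope.

(* A gadget has input sharings indexed by a finite type K; sharing k     *)
(* consists of n shares with values in V k.  The gadget draws its        *)
(* internal randomness uniformly from the finite type Rnd.  Its internal *)
(* wires are indexed by the finite type W (values in F), and its output  *)
(* sharing has n shares with values in O.                                *)

Definition sharing_input (K : finType) (V : K -> Type) (n : nat) :=
  forall k : K, 'I_n -> V k.

Definition view (K : finType) (V : K -> Type) (n : nat)
    (I : K -> {set 'I_n}) (inp : sharing_input V n) :
    forall k : K, 'I_n -> option (V k) :=
  fun k i => if i \in I k then Some (inp k i) else None.

Definition observation (W : finType) (F O : Type) (n : nat) : Type :=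
  ({ffun W -> option F} * {ffun 'I_n -> option O})%type.

Definition observe (Rnd W : finType) (F O : Type) (n : nat)
    (wire : Rnd -> W -> F) (out : Rnd -> 'I_n -> O)
    (P : {set W}) (Q : {set 'I_n}) (r : Rnd) : observation W F O n :=
  ([ffun w => if w \in P then Some (wire r w) else None],
   [ffun i => if i \in Q then Some (out r i) else None]).

Definition same_dist (A B : finType) (T : eqType) (f : A -> T) (g : B -> T) : Prop :=
  forall o : T,
    (#|[pred a | f a == o]|%:R / #|A|%:R : rat) = #|[pred b | g b == o]|%:R / #|B|%:R.

Definition NI_secure (t : nat) (K : finType) (V : K -> Type) (n : nat)
    (Rnd W : finType) (F O : eqType)
    (wire : sharing_input V n -> Rnd -> W -> F)
    (out : sharing_input V n -> Rnd -> 'I_n -> O) : Prop :=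
  forall (P : {set W}) (Q : {set 'I_n}), (#|P| + #|Q| <= t)%N ->
  exists I : K -> {set 'I_n},
    (forall k, #|I k| <= #|P| + #|Q|)%N /\
    exists (S : finType)
           (Sim : (forall k : K, 'I_n -> option (V k)) -> S -> observation W F O n),
      forall inp : sharing_input V n,
        same_dist (observe (wire inp) (out inp) P Q) (Sim (view I inp)).

Definition upair (n : nat) := {p : 'I_n * 'I_n | (p.1 < p.2)%N}.

Definition isw_rnd (F : finFieldType) (n : nat) := {ffun upair n -> F}.

(* wires: a_i | b_i | a_i*b_j | r_ij (i<j) | a_i b_j - r_ij (i<j)
   | r_ji := (a_i b_j - r_ij) + a_j b_i (i<j) | partial sums s_{i,k} *)
Definition isw_wire (n : nat) :=
  ('I_n + 'I_n + ('I_n * 'I_n) + upair n + upair n + upair n + ('I_n * 'I_n.+1))%type.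

Section ISW.
Variables (F : finFieldType) (n : nat).
Implicit Types (a b : 'I_n -> F) (r : isw_rnd F n).

Definition isw_u a b r (p : upair n) : F := a (val p).1 * b (val p).2 - r p.
Definition isw_rji a b r (p : upair n) : F := isw_u a b r p + a (val p).2 * b (val p).1.

(* the summand r_ij used in c_i *)
Definition isw_R a b r (i j : 'I_n) : F :=
  match (insub (i, j) : option (upair n)) with
  | Some p => r p
  | None => match (insub (j, i) : option (upair n)) with
            | Some p => isw_rji a b r p
            | None => 0
            end
  end.

Definition isw_psum a b r (i : 'I_n) (k : 'I_n.+1) : F :=
  a i * b i + \sum_(j < n | (j < k)%N && (j != i)) isw_R a b r i j.

Definition isw_out a b r (i : 'I_n) : F := isw_psum a b r i ord_max.

Definition isw_wire_val a b r (w : isw_wire n) : F :=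
  match w with
  | inl (inl (inl (inl (inl (inl i))))) => a i
  | inl (inl (inl (inl (inl (inr i))))) => b i
  | inl (inl (inl (inl (inr (i, j))))) => a i * b j
  | inl (inl (inl (inr p))) => r p
  | inl (inl (inr p)) => isw_u a b r p
  | inl (inr p) => isw_rji a b r p
  | inr (i, k) => isw_psum a b r i k
  end.

End ISW.

(* Input sharing index: Some false = x, Some true = y, None = c.         *)

Definition sms_V (F : finFieldType) (l : nat) (k : option bool) : Type :=
  match k with Some _ => 'rV[F]_l | None => (F : Type) end.

Section SecMultSub.
Variables (F : finFieldType) (l n : nat).

Definition sms_input := sharing_input (sms_V F l) n.

Definition sms_x (inp : sms_input) (j : 'I_l) (i : 'I_n) : F :=
  (inp (Some false) i : 'rV[F]_l) 0 j.
Definition sms_y (inp : sms_input) (j : 'I_l) (i : 'I_n) : F :=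
  (inp (Some true) i : 'rV[F]_l) 0 j.
Definition sms_c (inp : sms_input) (i : 'I_n) : F := (inp None i : F).

Definition sms_rnd := {ffun 'I_l -> isw_rnd F n}.

(* wires: those of the j-th SecMult | y[j]_i | z[j]_i *)
Definition sms_wire := (('I_l * isw_wire n) + ('I_l * 'I_n) + ('I_l * 'I_n))%type.

Definition sms_t inp (r : sms_rnd) (j : 'I_l) (i : 'I_n) : F :=
  isw_out (sms_x inp j) (sms_c inp) (r j) i.

Definition sms_z inp (r : sms_rnd) (j : 'I_l) (i : 'I_n) : F :=
  sms_y inp j i - sms_t inp r j i.

Definition sms_wire_val inp (r : sms_rnd) (w : sms_wire) : F :=
  match w with
  | inl (inl (j, v)) => isw_wire_val (sms_x inp j) (sms_c inp) (r j) v
  | inl (inr (j, i)) => sms_y inp j i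
  | inr (j, i) => sms_z inp r j i
  end.

Definition sms_out inp (r : sms_rnd) (i : 'I_n) : 'rV[F]_l :=
  \row_j sms_z inp r j i.

End SecMultSub.

(* Main.v *)
Require Import Defs.
From HB Require Import structures.
From mathcomp Require Import all_boot all_order all_algebra.
From mathcomp Require Import ring.
Set Implicit Arguments. Unset Strict Implicit. Unset Printing Implicit Defensive.
Import GRing.Theory.
Local Open Scope ring_scope.

Section ISWShift.
Variables (F : finFieldType) (n : nat) (a b a' b' : 'I_n -> F) (e : 'I_n -> 'I_n -> F).
Definition Dd (p q : 'I_n) : F := a' p * b' q - a p * b q.
Hypothesis he : forall p q, p != q -> e p q + e q p = - (Dd p q + Dd q p).
Definition shiftr (r : isw_rnd F n) : isw_rnd F n := [ffun p => r p + e (val p).1 (val p).2].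

Lemma R_shift r i q : i != q -> isw_R a b (shiftr r) i q = isw_R a' b' r i q + e i q.
Proof.
move=> Hiq; rewrite /isw_R.
case: insubP => [p _ vp | nP].
  by rewrite ffunE vp.
case: insubP => [p _ vp | nP2].
  rewrite /isw_rji /isw_u ffunE vp /=.
  have h := he Hiq.
  have E : e q i = - (Dd i q + Dd q i) - e i q by rewrite -h [e i q + _]addrC addrK.
  rewrite E /Dd; ring.
exfalso; move: nP nP2 Hiq => /=; rewrite -!leqNgt => h1 h2.
by have := @anti_leq i q; rewrite h1 h2 => /(_ isT) /val_inj ->; rewrite eqxx.
Qed.

Lemma psum_shift r i k : isw_psum a b (shiftr r) i k =
  isw_psum a' b' r i k - Dd i i + \sum_(q < n | (q < k)%N && (q != i)) e i q.
Proof.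
rewrite /isw_psum (eq_bigr (fun q => isw_R a' b' r i q + e i q)); last first.
  by move=> q /andP[_ hq]; rewrite R_shift // eq_sym.
rewrite big_split /= /Dd; ring.
Qed.
End ISWShift.
Section Inst.
Variables (F : finFieldType) (n : nat) (a b a' b' : 'I_n -> F).
Variables (Z O : {set 'I_n}) (f : 'I_n).
Hypothesis fZ : f \notin Z.
Hypothesis fO : f \notin O.
Hypothesis ZA : forall p, p \in Z -> a p = a' p.
Hypothesis ZB : forall p, p \in Z -> b p = b' p.
Local Notation D := (Dd a b a' b').

Definition e0 (p q : 'I_n) : F :=
  if p \in Z then 0 else if q \in Z then - (D p q + D q p) else - D p q.
Definition Xo (o : 'I_n) : F := D o o - \sum_(q < n | q != o) e0 o q.
Definition ee (p q : 'I_n) : F :=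
  e0 p q + (if (q == f) && (p \in O) && (p \notin Z) then Xo p else 0)
         - (if (p == f) && (q \in O) && (q \notin Z) then Xo q else 0).

Lemma DZ p q : p \in Z -> q \in Z -> D p q = 0.
Proof. by move=> hp hq; rewrite /Dd ZA // ZB // subrr. Qed.

Lemma ee_sym p q : p != q -> ee p q + ee q p = - (D p q + D q p).
Proof.
move=> _; rewrite /ee.
have h0 : e0 p q + e0 q p = - (D p q + D q p).
  rewrite /e0; case: (boolP (p \in Z)) => hp; case: (boolP (q \in Z)) => hq /=;
  by try rewrite (DZ hp hq) (DZ hq hp); ring.
rewrite -h0; ring.
Qed.

Lemma ee_Z p q : p \in Z -> ee p q = 0.
Proof.
move=> hp; rewrite /ee /e0 hp /=.
have -> : (p == f) = false by apply/negbTE; apply: contraNneq fZ => <-.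
by rewrite ?andbF /=; ring.
Qed.

Lemma ee_ZR p q : p \notin Z -> q \in Z -> ee p q = - (D p q + D q p).
Proof.
move=> hp hq; rewrite /ee /e0 (negbTE hp) hq /=.
have -> : (q == f) = false by apply/negbTE; apply: contraNneq fZ => <-.
by rewrite ?andbF /=; ring.
Qed.

Lemma ee_free p q : p \notin Z -> q \notin Z ->
  ~~ ((q == f) && (p \in O)) -> ~~ ((p == f) && (q \in O)) -> ee p q = - D p q.
Proof.
move=> hp hq h1 h2; rewrite /ee /e0 (negbTE hp) (negbTE hq) /=.
by rewrite (negbTE h1) (negbTE h2) /=; ring.
Qed.

Lemma ee_rowZ o (k : pred 'I_n) : o \in Z -> \sum_(q < n | k q && (q != o)) ee o q = 0.
Proof. by move=> ho; rewrite big1 // => q _; rewrite ee_Z. Qed.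

Lemma ee_rowO o : o \notin Z -> o \in O -> \sum_(q < n | q != o) ee o q = D o o.
Proof.
move=> hZ hO.
have hof : (o == f) = false by apply/negbTE; apply: contraNneq fO => <-.
rewrite /ee (eq_bigr (fun q => e0 o q + (if q == f then Xo o else 0))); last first.
  by move=> q _; rewrite hof hO hZ /= !andbT; ring.
rewrite big_split /= [X in _ + X](bigD1 f) /=; last by rewrite eq_sym hof.
rewrite eqxx (big1 _ _ (fun q : 'I_n => if q == f then Xo o else 0)) ?addr0; last first.
  by move=> q /andP[_ /negbTE ->].
rewrite /Xo; ring.
Qed.
End Inst.
Section Main.
Variables (F : finFieldType) (l n : nat).
Variables (P : {set sms_wire l n}) (Q : {set 'I_n}).

Definition gA (w : sms_wire l n) : 'I_n :=
  match w with
  | inl (inl (_, v)) =>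
    match v with
    | inl (inl (inl (inl (inl (inl i))))) => i
    | inl (inl (inl (inl (inl (inr i))))) => i
    | inl (inl (inl (inl (inr (i, _))))) => i
    | inl (inl (inl (inr p))) => (val p).1
    | inl (inl (inr p)) => (val p).1
    | inl (inr p) => (val p).2
    | inr (i, _) => i
    end
  | inl (inr (_, i)) => i
  | inr (_, i) => i
  end.

Definition isZw (j : 'I_l) (w : sms_wire l n) : bool :=
  match w with
  | inl (inl (j', v)) => (j' == j) &&
    match v with
    | inl (inl (inl (inr _))) => true
    | inl (inr _) => true
    | inr _ => true
    | _ => false
    end
  | _ => false
  end.

Definition Zs (j : 'I_l) : {set 'I_n} :=
  [set i | [exists w in P, isZw j w && (gA w == i)]].
Definition Os (j : 'I_l) : {set 'I_n} :=
  [set i | (i \in Q) || (inr (j, i) \in P)].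

Definition gB (w : sms_wire l n) : 'I_n :=
  match w with
  | inl (inl (j, v)) =>
    match v with
    | inl (inl (inl (inl (inr (_, q))))) => q
    | inl (inl (inr p)) =>
        if ((val p).2 \in Zs j) && ((val p).1 \notin Zs j) then (val p).1 else (val p).2
    | _ => gA w
    end
  | _ => gA w
  end.

Definition gH (j : 'I_l) (w : sms_wire l n) : 'I_n :=
  match w with
  | inl (inl (_, v)) =>
    match v with
    | inl (inl (inr p)) => if (val p).1 \in Os j then (val p).2 else (val p).1
    | _ => gA w
    end
  | _ => gA w
  end.

Definition Ix := gA @: P.
Definition Ic := gB @: P.
Definition Iy := gA @: P :|: Q.
Definition Idx (k : option bool) : {set 'I_n} :=
  match k with Some false => Ix | Some true => Iy | None => Ic end.

Lemma Idx_card k : (#|Idx k| <= #|P| + #|Q|)%N.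
Proof.
case: k => [[]|] /=.
- apply: leq_trans (leq_card_setU _ _) _; exact: leq_add (leq_imset_card _ _) (leqnn _).
- apply: leq_trans (leq_imset_card _ _) (leq_addr _ _).
- apply: leq_trans (leq_imset_card _ _) (leq_addr _ _).
Qed.

Lemma Zs_x j i : i \in Zs j -> i \in Ix.
Proof.
rewrite inE => /existsP[w /andP[wP /andP[_ /eqP <-]]].
by apply: imset_f.
Qed.

Lemma Zs_c j i : i \in Zs j -> i \in Ic.
Proof.
rewrite inE => /existsP[w /andP[wP /andP[hz /eqP <-]]].
have -> : gA w = gB w.
  by case: w hz {wP} => [[[j' v]|//]|//] /= /andP[_];
     case: v => [[[[[[?|?]|[? ?]]|?]|?]|?]|[? ?]].
by apply: imset_f.
Qed.

Definition Sj j : {set 'I_n} := gH j @: P :|: Q.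
Definition fj j (d : 'I_n) : 'I_n := odflt d [pick f in ~: Sj j].
Variable d : 'I_n.
Hypothesis hcard : (#|P| + #|Q| < n)%N.

Lemma fj_notin j : fj j d \notin Sj j.
Proof.
rewrite /fj; case: pickP => [f|h]; first by rewrite inE.
exfalso.
have h0 : #|~: Sj j| = 0%N by apply: eq_card0 => x; rewrite /= h.
have := cardsC (Sj j); rewrite h0 addn0 card_ord => hS.
have : (#|Sj j| <= #|P| + #|Q|)%N.
  apply: leq_trans (leq_card_setU _ _) _; exact: leq_add (leq_imset_card _ _) (leqnn _).
by rewrite hS leqNgt hcard.
Qed.

Lemma fj_Z j : fj j d \notin Zs j.
Proof.
apply: contra (fj_notin j); rewrite inE => /existsP[w /andP[wP /andP[hz /eqP <-]]].
have -> : gA w = gH j w.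
  by case: w hz {wP} => [[[j' v]|//]|//] /= /andP[_];
     case: v => [[[[[[?|?]|[? ?]]|?]|?]|?]|[? ?]].
by rewrite inE imset_f.
Qed.

Lemma fj_O j : fj j d \notin Os j.
Proof.
apply: contra (fj_notin j); rewrite inE => /orP[hQ|hP]; rewrite inE ?hQ ?orbT //.
by apply/orP; left; apply/imsetP; exists (inr (j, fj j d)).
Qed.

Lemma fj_u j p : inl (inl (j, inl (inl (inr p)))) \in P ->
  fj j d != (if (val p).1 \in Os j then (val p).2 else (val p).1).
Proof.
move=> wP; apply: contraNneq (fj_notin j) => ->.
by rewrite inE; apply/orP; left; apply/imsetP; exists (inl (inl (j, inl (inl (inr p))))).
Qed.
Variables (inp inp' : sms_input F l n).
Hypothesis hag : forall k i, i \in Idx k -> inp k i = inp' k i.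

Lemma ag_x j i : i \in Ix -> sms_x inp j i = sms_x inp' j i.
Proof. by move=> h; rewrite /sms_x (hag (k := Some false) h). Qed.
Lemma ag_c i : i \in Ic -> sms_c inp i = sms_c inp' i.
Proof. by move=> h; rewrite /sms_c (hag (k := None) h). Qed.
Lemma ag_y j i : i \in Iy -> sms_y inp j i = sms_y inp' j i.
Proof. by move=> h; rewrite /sms_y (hag (k := Some true) h). Qed.

Definition EE (j : 'I_l) := ee (sms_x inp j) (sms_c inp) (sms_x inp' j) (sms_c inp')
   (Zs j) (Os j) (fj j d).

Definition bigshift (r : sms_rnd F l n) : sms_rnd F l n :=
  [ffun j => shiftr (EE j) (r j)].

Lemma bigshift_inj : injective bigshift.
Proof.
move=> r1 r2 h; apply/ffunP => j; apply/ffunP => p.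
have := congr1 (fun r : sms_rnd F l n => r j p) h; rewrite /= !ffunE.
by move/addIr.
Qed.

Section J.
Variable j : 'I_l.
Local Notation a := (sms_x inp j).
Local Notation b := (sms_c inp).
Local Notation a' := (sms_x inp' j).
Local Notation b' := (sms_c inp').
Local Notation Z := (Zs j).
Local Notation O := (Os j).
Local Notation f := (fj j d).

Lemma ZA p : p \in Z -> a p = a' p.
Proof. by move=> h; apply: ag_x; apply: Zs_x h. Qed.
Lemma ZB p : p \in Z -> b p = b' p.
Proof. by move=> h; apply: ag_c; apply: Zs_c h. Qed.

Lemma EE_sym p q : p != q -> EE j p q + EE j q p = - (Dd a b a' b' p q + Dd a b a' b' q p).
Proof. exact: (ee_sym O f ZA ZB). Qed.

Lemma psumZ r i k : i \in Z ->
  isw_psum a b (shiftr (EE j) r) i k = isw_psum a' b' r i k.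
Proof.
move=> hi; rewrite (@psum_shift _ _ a b a' b'); last exact: EE_sym.
rewrite (ee_rowZ a b a' b' O (fj_Z j) (fun q => (q < k)%N) hi).
by rewrite (DZ ZA ZB hi hi) subr0 addr0.
Qed.

Lemma outZO r i : (i \in Z) || (i \in O) ->
  isw_out a b (shiftr (EE j) r) i = isw_out a' b' r i.
Proof.
case: (boolP (i \in Z)) => hZ /= hO; first exact: psumZ.
rewrite /isw_out (@psum_shift _ _ a b a' b'); last exact: EE_sym.
rewrite (eq_bigl (fun q => q != i)); last by move=> q; rewrite ltn_ord.
rewrite (ee_rowO a b a' b' (fj_O j) hZ hO); ring.
Qed.
Lemma wire_eq r v : inl (inl (j, v)) \in P ->
  isw_wire_val a b (shiftr (EE j) r) v = isw_wire_val a' b' r v.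
Proof.
move=> wP.
have hA := imset_f gA wP. have hB := imset_f gB wP.
have hZ : isZw j (inl (inl (j, v))) -> gA (inl (inl (j,v))) \in Zs j.
  by move=> hz; rewrite inE; apply/existsP; exists (inl (inl (j, v))); rewrite wP hz eqxx.
have hD : forall p q, p \in Ix -> q \in Ic -> Dd a b a' b' p q = 0.
  by move=> p q hp hq; rewrite /Dd (ag_x j hp) (ag_c hq) subrr.
case: v wP hA hB hZ => [[[[[[i|i]|[i q]]|p]|p]|p]|[i k]] wP /= hA hB hZ.
- exact: ag_x.
- exact: ag_c.
- by rewrite (ag_x j hA) (ag_c hB).
- by rewrite ffunE /EE ee_Z ?addr0 //; [exact: fj_Z | apply: hZ; rewrite eqxx].
- rewrite /isw_u ffunE.
  have -> : EE j (val p).1 (val p).2 = - Dd a b a' b' (val p).1 (val p).2.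
    rewrite /EE; case: (boolP ((val p).1 \in Zs j)) => h1.
      rewrite ee_Z //; last exact: fj_Z.
      by rewrite hD ?oppr0 // ?(Zs_x h1) //; move: hB; rewrite h1 andbF.
    case: (boolP ((val p).2 \in Zs j)) => h2.
      rewrite ee_ZR //; last exact: fj_Z.
      rewrite (hD (val p).2 (val p).1) ?addr0 ?(Zs_x h2) //.
      by move: hB; rewrite h1 h2.
    rewrite ee_free //.
    1,2: apply/negP => /andP[/eqP hf hO]; have := fj_u wP.
    1,2: first [ by rewrite hO hf eqxx | by have := fj_O j; rewrite -hf => /negbTE ->; rewrite eqxx ].
  rewrite /Dd; ring.
- rewrite /isw_rji /isw_u ffunE.
  have h2 : (val p).2 \in Zs j by apply: hZ; rewrite eqxx.
  have -> : EE j (val p).1 (val p).2 =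
      - (Dd a b a' b' (val p).1 (val p).2 + Dd a b a' b' (val p).2 (val p).1).
    rewrite /EE; case: (boolP ((val p).1 \in Zs j)) => h1.
      rewrite ee_Z //; last exact: fj_Z.
      by rewrite (DZ ZA ZB h1 h2) (DZ ZA ZB h2 h1) addr0 oppr0.
    by rewrite ee_ZR //; exact: fj_Z.
  rewrite /Dd; ring.
- by apply: psumZ; apply: hZ; rewrite eqxx.
Qed.
End J.
Lemma obs_eq r : observe (sms_wire_val inp) (sms_out inp) P Q (bigshift r)
  = observe (sms_wire_val inp') (sms_out inp') P Q r.
Proof.
rewrite /observe; congr pair; apply/ffunP => w; rewrite !ffunE; case: ifP => // wP; congr Some.
- case: w wP => [[[j v]|[j i]]|[j i]] wP /=.
  + rewrite ffunE; exact: wire_eq.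
  + apply: ag_y; rewrite /Iy inE; apply/orP; left; exact: (imset_f gA wP).
  + rewrite /sms_z /sms_t ffunE (ag_y j (i := i)); last first.
      by rewrite /Iy inE; apply/orP; left; exact: (imset_f gA wP).
    by rewrite outZO // [i \in Os j]inE wP orbT orbT.
- apply/rowP => j; rewrite !mxE /sms_z /sms_t ffunE (ag_y j (i := w)); last first.
    by rewrite /Iy inE wP orbT.
  by rewrite outZO // [w \in Os j]inE wP orbT.
Qed.
End Main.

Definition dfl (F : finFieldType) (l : nat) (k : option bool) : sms_V F l k :=
  match k return sms_V F l k with Some _ => (0 : 'rV[F]_l) | None => (0 : F) end.

Definition fillv (F : finFieldType) (l n : nat)
  (v : forall k : option bool, 'I_n -> option (sms_V F l k)) : sms_input F l n :=
  fun k i => match v k i with Some x => x | None => dfl F l k end.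

Theorem lemma3 (F : finFieldType) (t l : nat) (ht : (1 <= t)%N) :
  @NI_secure t _ (sms_V F l) t.+1 (sms_rnd F l t.+1) (sms_wire l t.+1) F
    ('rV[F]_l) (@sms_wire_val F l t.+1) (@sms_out F l t.+1).
Proof.
move=> P Q hPQ.
exists (Idx P Q); split; first by move=> k; exact: Idx_card.
exists (sms_rnd F l t.+1),
  (fun v s => observe (sms_wire_val (fillv v)) (sms_out (fillv v)) P Q s).
move=> inp; set inp' := fillv (view (Idx P Q) inp).
have hag : forall k i, i \in Idx P Q k -> inp k i = inp' k i.
  by move=> k i h; rewrite /inp' /fillv /view h.
have hcard : (#|P| + #|Q| < t.+1)%N by rewrite ltnS.
move=> o; congr (_ / _); congr (_ %:R).
set sh := bigshift P Q ord0 inp inp'.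
have sh_inj : injective sh by apply: bigshift_inj.
transitivity #|sh @^-1: [set r | observe (sms_wire_val inp) (sms_out inp) P Q r == o]|.
  by rewrite card_preimset // cardsE.
apply: eq_card => s; rewrite !inE /= /sh (obs_eq ord0 hcard hag).
by [].
Qed.
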